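(* Let $p>1$ and let $s,q,V:\mathbb{R}^3\to(0,\infty)$ be radially symmetric $C^2$-functions with one-dimensional representatives $\tilde s,\tilde q,\tilde V$. Let $\psi:[0,\infty)\times\mathbb{R}\to\mathbb{R}$ be a $C^2$-function with $\psi(0,t)=\psi''(0,t)=0$ for all $t$, where $'$ denotes $\partial/\partial r$. Then $U(x,t):=\psi(|x|,t)\frac{x}{|x|}$ (extended to $x=0$) is a $C^2(\mathbb{R}^3\times\mathbb{R})$ function, and it solves $$s(x)\partial_t^2U+\nabla\times\nabla\times U+q(x)U\pm V(x)|U|^{p-1}U=0\quad\text{on }\mathbb{R}^3\times\mathbb{R}$$ if and only if $\psi$ satisfies $$\tilde s(r)\ddot\psi+\tilde q(r)\psi\pm\tilde V(r)|\psi|^{p-1}\psi=0\quad\text{for }r\ge0,\ t\in\mathbb{R},$$ with the same choice of sign in both equations, where $\dot{}$ denotes $\partial/\partial t$.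
   Context: For a radially symmetric $C^2$-function $f:\mathbb{R}^3\to\mathbb{R}$, its one-dimensional representative $\tilde f:[0,\infty)\to\mathbb{R}$ is defined by $\tilde f(|x|)=f(x)$; it satisfies $\tilde f\in C^2([0,\infty))$, $\tilde f'(0)=0$. *)

(* Defs.v *)
From Stdlib Require Import Reals Lra List.
From Coquelicot Require Import Coquelicot.
Import ListNotations.
Open Scope R_scope.

Definition R3 : Type := (R * R * R)%type.
Definition c1 (x : R3) : R := fst (fst x).
Definition c2 (x : R3) : R := snd (fst x).
Definition c3 (x : R3) : R := snd x.

Definition norm3 (x : R3) : R := sqrt (c1 x ^ 2 + c2 x ^ 2 + c3 x ^ 2).

Definition dirD {V : NormedModule R_AbsRing} (f : V -> R) (v : V) (x : V) : R :=
  Derive (fun h : R => f (plus x (scal h v))) 0.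
Definition dir_ex {V : NormedModule R_AbsRing} (f : V -> R) (v : V) (x : V) : Prop :=
  ex_derive (fun h : R => f (plus x (scal h v))) 0.

Definition C2 {V : NormedModule R_AbsRing} (B : list V) (f : V -> R) : Prop :=
  (forall x, continuous f x) /\
  (forall v, In v B ->
     (forall x, dir_ex f v x) /\ (forall x, continuous (dirD f v) x)) /\
  (forall v w, In v B -> In w B ->
     (forall x, dir_ex (dirD f v) w x) /\
     (forall x, continuous (dirD (dirD f v) w) x)).

Definition B3 : list (R * R * R) := [(1, 0, 0); (0, 1, 0); (0, 0, 1)].
Definition B4 : list (R * R * R * R) :=
  [(1, 0, 0, 0); (0, 1, 0, 0); (0, 0, 1, 0); (0, 0, 0, 1)].

Definition VF : Type := R3 -> R -> R3.
Definition F1 (F : VF) : R3 -> R -> R := fun x t => c1 (F x t).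
Definition F2 (F : VF) : R3 -> R -> R := fun x t => c2 (F x t).
Definition F3 (F : VF) : R3 -> R -> R := fun x t => c3 (F x t).

Definition px1 (g : R3 -> R -> R) (x : R3) (t : R) : R :=
  Derive (fun y => g (y, c2 x, c3 x) t) (c1 x).
Definition px2 (g : R3 -> R -> R) (x : R3) (t : R) : R :=
  Derive (fun y => g (c1 x, y, c3 x) t) (c2 x).
Definition px3 (g : R3 -> R -> R) (x : R3) (t : R) : R :=
  Derive (fun y => g (c1 x, c2 x, y) t) (c3 x).
Definition ptt (g : R3 -> R -> R) (x : R3) (t : R) : R :=
  Derive (fun s => Derive (fun u => g x u) s) t.

Definition curl (F : VF) : VF := fun x t =>
  (px2 (F3 F) x t - px3 (F2 F) x t,
   px3 (F1 F) x t - px1 (F3 F) x t,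
   px1 (F2 F) x t - px2 (F1 F) x t).

Definition dtt (F : VF) : VF := fun x t =>
  (ptt (F1 F) x t, ptt (F2 F) x t, ptt (F3 F) x t).

Definition C2_VF (U : VF) : Prop :=
  C2 B4 (fun z : R * R * R * R => c1 (U (fst z) (snd z))) /\
  C2 B4 (fun z : R * R * R * R => c2 (U (fst z) (snd z))) /\
  C2 B4 (fun z : R * R * R * R => c3 (U (fst z) (snd z))).

(** a^b for a >= 0 (with 0^b := 0, as appropriate for b > 0). *)
Definition rpow (a b : R) : R := if Rlt_dec 0 a then Rpower a b else 0.

Definition radial_field (psi : R -> R -> R) : VF := fun x t =>
  if Req_EM_T (norm3 x) 0 then (0, 0, 0)
  else let k := psi (norm3 x) t / norm3 x in (k * c1 x, k * c2 x, k * c3 x).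

(** s d_t^2 U + curl curl U + q U + sigma V |U|^(p-1) U = 0 on R^3 x R,
    sigma = +1 or -1 encodes the sign choice. *)
Definition solves_pde (s q V : R3 -> R) (p sigma : R) (U : VF) : Prop :=
  forall x t,
    let a := dtt U x t in
    let b := curl (curl U) x t in
    let u := U x t in
    let k := sigma * V x * rpow (norm3 u) (p - 1) in
    s x * c1 a + c1 b + q x * c1 u + k * c1 u = 0 /\
    s x * c2 a + c2 b + q x * c2 u + k * c2 u = 0 /\
    s x * c3 a + c3 b + q x * c3 u + k * c3 u = 0.

Definition dr (f : R -> R -> R) : R -> R -> R := fun r t => Derive (fun y => f y t) r.
Definition dt (f : R -> R -> R) : R -> R -> R := fun r t => Derive (fun s => f r s) t.
Definition uncurry (f : R -> R -> R) : R * R -> R := fun z => f (fst z) (snd z).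

Definition solves_ode (st qt Vt : R -> R) (p sigma : R) (psi : R -> R -> R) : Prop :=
  forall r t, 0 <= r ->
    st r * dt (dt psi) r t + qt r * psi r t
    + sigma * Vt r * (rpow (Rabs (psi r t)) (p - 1) * psi r t) = 0.

Definition derivs2 (f : R -> R -> R) : list (R -> R -> R) :=
  [f; dr f; dt f; dr (dr f); dt (dr f); dr (dt f); dt (dt f)].

(** psi in C^2([0,oo) x R), in the sense of C^2(closure Omega):
    psi is C^2 on the open half-plane r > 0, all its partial derivatives of
    order <= 2 extend continuously to r = 0, and psi itself is continuous
    on the closed half-plane. Values of psi at r < 0 are irrelevant. *)
Definition C2_halfplane (f : R -> R -> R) : Prop :=
  (forall r t, 0 < r ->
     ex_derive (fun y => f y t) r /\ ex_derive (fun s => f r s) t /\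
     ex_derive (fun y => dr f y t) r /\ ex_derive (fun s => dr f r s) t /\
     ex_derive (fun y => dt f y t) r /\ ex_derive (fun s => dt f r s) t) /\
  (forall g, In g (derivs2 f) -> forall r t, 0 < r -> continuous (uncurry g) (r, t)) /\
  (forall g, In g (derivs2 f) -> forall t, exists l : R,
     filterlim (uncurry g) (within (fun z : R * R => 0 < fst z) (locally (0, t)))
       (locally l)) /\
  (forall t, filterlim (uncurry f) (within (fun z : R * R => 0 <= fst z) (locally (0, t)))
       (locally (f 0 t))).

(* Main.v *)
Require Import Defs.
From Stdlib Require Import Reals List.
From Coquelicot Require Import Coquelicot.
Open Scope R_scope.
From Stdlib Require Import Lra Psatz FunctionalExtensionality ClassicalEpsilon.
Import Defs.
Open Scope R_scope.


Definition lim0 (g : R -> R -> R) (t0 l : R) : Prop :=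
  forall eps : posreal, exists d : posreal, forall u v,
    0 < u < d -> Rabs (v - t0) < d -> Rabs (g u v - l) < eps.

Lemma lim0_of_filterlim g t0 l :
  filterlim (uncurry g) (within (fun z : R * R => 0 < fst z) (locally (0, t0))) (locally l) ->
  lim0 g t0 l.
Proof.
  intros H eps.
  assert (Hl : locally l (fun y => Rabs (y - l) < eps)) by (exists eps; intros y Hy; exact Hy).
  specialize (H _ Hl). destruct H as [d Hd]. exists d. intros u v Hu Hv.
  apply (Hd (u, v)); [split; simpl | simpl; lra].
  - change (Rabs (u - 0) < d). rewrite Rminus_0_r, Rabs_pos_eq; lra.
  - exact Hv.
Qed.

Lemma lim0_of_filterlim_le g t0 l :
  filterlim (uncurry g) (within (fun z : R * R => 0 <= fst z) (locally (0, t0))) (locally l) ->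
  lim0 g t0 l.
Proof.
  intros H eps.
  assert (Hl : locally l (fun y => Rabs (y - l) < eps)) by (exists eps; intros y Hy; exact Hy).
  specialize (H _ Hl). destruct H as [d Hd]. exists d. intros u v Hu Hv.
  apply (Hd (u, v)); [split; simpl | simpl; lra].
  - change (Rabs (u - 0) < d). rewrite Rminus_0_r, Rabs_pos_eq; lra.
  - exact Hv.
Qed.

Lemma lim0_comp2 (f g : R -> R -> R) (h : R -> R -> R) t0 l1 l2 :
  lim0 f t0 l1 -> lim0 g t0 l2 -> continuity_2d_pt h l1 l2 ->
  lim0 (fun u v => h (f u v) (g u v)) t0 (h l1 l2).
Proof.
  intros Hf Hg Hh eps. destruct (Hh eps) as [d Hd].
  destruct (Hf d) as [d1 H1]. destruct (Hg d) as [d2 H2].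
  assert (Hm : 0 < Rmin d1 d2) by (apply Rmin_pos; apply cond_pos).
  exists (mkposreal _ Hm). simpl. intros u v Hu Hv.
  apply Hd; [apply H1 | apply H2]; try split; try lra;
  try (eapply Rlt_le_trans; [apply Hu|]); try (eapply Rlt_le_trans; [apply Hv|]);
  try apply Rmin_l; try apply Rmin_r.
Qed.

Lemma lim0_ext (f g : R -> R -> R) t0 l :
  (forall u v, 0 < u -> f u v = g u v) -> lim0 f t0 l -> lim0 g t0 l.
Proof.
  intros E H eps. destruct (H eps) as [d Hd]. exists d. intros u v Hu Hv.
  rewrite <- E by lra. auto.
Qed.

Lemma lim0_const c t0 : lim0 (fun _ _ => c) t0 c.
Proof. intros eps. exists eps. intros. rewrite Rminus_eq_0, Rabs_R0. apply cond_pos. Qed.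

Lemma lim0_plus f g t0 l1 l2 : lim0 f t0 l1 -> lim0 g t0 l2 ->
  lim0 (fun u v => f u v + g u v) t0 (l1 + l2).
Proof.
  intros. apply (lim0_comp2 f g (fun a b => a + b)); auto.
  apply continuity_2d_pt_plus; [apply continuity_2d_pt_id1 | apply continuity_2d_pt_id2].
Qed.

Lemma lim0_minus f g t0 l1 l2 : lim0 f t0 l1 -> lim0 g t0 l2 ->
  lim0 (fun u v => f u v - g u v) t0 (l1 - l2).
Proof.
  intros. apply (lim0_comp2 f g (fun a b => a - b)); auto.
  apply continuity_2d_pt_minus; [apply continuity_2d_pt_id1 | apply continuity_2d_pt_id2].
Qed.

Lemma lim0_mult f g t0 l1 l2 : lim0 f t0 l1 -> lim0 g t0 l2 ->
  lim0 (fun u v => f u v * g u v) t0 (l1 * l2).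
Proof.
  intros. apply (lim0_comp2 f g (fun a b => a * b)); auto.
  apply continuity_2d_pt_mult; [apply continuity_2d_pt_id1 | apply continuity_2d_pt_id2].
Qed.

Lemma lim0_scal c f t0 l : lim0 f t0 l -> lim0 (fun u v => c * f u v) t0 (c * l).
Proof. intros. apply lim0_mult; auto. apply lim0_const. Qed.

Lemma lim0_unique g t0 l1 l2 : lim0 g t0 l1 -> lim0 g t0 l2 -> l1 = l2.
Proof.
  intros H1 H2. apply Rminus_diag_uniq. apply Rabs_eq_0.
  apply Rle_antisym; [|apply Rabs_pos].
  apply le_epsilon. intros e He. rewrite Rplus_0_l.
  assert (He2 : 0 < e/2) by lra.
  destruct (H1 (mkposreal _ He2)) as [d1 Hd1]. destruct (H2 (mkposreal _ He2)) as [d2 Hd2].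
  simpl in *.
  set (u := Rmin d1 d2 / 2).
  assert (0 < Rmin d1 d2) by (apply Rmin_pos; apply cond_pos).
  assert (Hu1 : 0 < u < d1) by (unfold u; split; [lra|]; pose proof (Rmin_l d1 d2); lra).
  assert (Hu2 : 0 < u < d2) by (unfold u; split; [lra|]; pose proof (Rmin_r d1 d2); lra).
  specialize (Hd1 u t0 Hu1). specialize (Hd2 u t0 Hu2).
  rewrite Rminus_eq_0, Rabs_R0 in Hd1, Hd2. specialize (Hd1 (cond_pos d1)). specialize (Hd2 (cond_pos d2)).
  replace (l1 - l2) with (-(g u t0 - l1) + (g u t0 - l2)) by ring.
  eapply Rle_trans; [apply Rabs_triang|]. rewrite Rabs_Ropp. lra.
Qed.

Lemma lim0_fix g t l : lim0 g t l -> forall eps : posreal, exists d : posreal,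
  forall u, 0 < u < d -> Rabs (g u t - l) < eps.
Proof.
  intros H eps. destruct (H eps) as [d Hd]. exists d. intros u Hu. apply Hd; auto.
  rewrite Rminus_eq_0, Rabs_R0. apply cond_pos.
Qed.

Lemma cont1_intro (a : R -> R) t0 :
  (forall eps : posreal, exists d : posreal, forall y, Rabs (y - t0) < d -> Rabs (a y - a t0) < eps) ->
  continuous a t0.
Proof.
  intros H P [eps HP]. destruct (H eps) as [d Hd]. exists d. intros y Hy. apply HP. apply Hd. exact Hy.
Qed.

Lemma cont1_elim (a : R -> R) t0 : continuous a t0 ->
  forall eps : posreal, exists d : posreal, forall y, Rabs (y - t0) < d -> Rabs (a y - a t0) < eps.
Proof.
  intros H eps.
  assert (Hl : locally (a t0) (fun y => Rabs (y - a t0) < eps)) by (exists eps; intros y Hy; exact Hy).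
  destruct (H _ Hl) as [d Hd]. exists d. intros y Hy. apply Hd. exact Hy.
Qed.

Lemma lim0_cont (g : R -> R -> R) (a : R -> R) :
  (forall t, lim0 g t (a t)) -> forall t0, continuous a t0.
Proof.
  intros H t0. apply cont1_intro. intros eps.
  assert (He2 : 0 < eps/2) by (pose proof (cond_pos eps); lra).
  destruct (H t0 (mkposreal _ He2)) as [d Hd]. exists d. intros y Hy.
  destruct (H y (mkposreal _ He2)) as [d' Hd']. simpl in *.
  set (u := Rmin d d' / 2).
  assert (0 < Rmin d d') by (apply Rmin_pos; apply cond_pos).
  assert (Hu1 : 0 < u < d) by (unfold u; split; [lra|]; pose proof (Rmin_l d d'); lra).
  assert (Hu2 : 0 < u < d') by (unfold u; split; [lra|]; pose proof (Rmin_r d d'); lra).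
  specialize (Hd u y Hu1 Hy). specialize (Hd' u y Hu2).
  rewrite Rminus_eq_0, Rabs_R0 in Hd'. specialize (Hd' (cond_pos d')).
  replace (a y - a t0) with (-(g u y - a y) + (g u y - a t0)) by ring.
  eapply Rle_lt_trans; [apply Rabs_triang|]. rewrite Rabs_Ropp. lra.
Qed.

Lemma cont_of_derive (k : R -> R) y l : is_derive k y l -> continuity_pt k y.
Proof.
  intros H. apply continuity_pt_filterlim. apply (ex_derive_continuous (K:=R_AbsRing) (V:=R_NormedModule)). exists l; exact H.
Qed.

Lemma mvt_bound (k dk : R -> R) a b M eps : a < b ->
  (forall y, a < y < b -> is_derive k y (dk y)) ->
  (forall y, a <= y <= b -> continuity_pt k y) ->
  (forall y, a <= y <= b -> Rabs (dk y - M) <= eps) ->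
  Rabs (k b - k a - M * (b - a)) <= eps * (b - a).
Proof.
  intros Hab Hd Hc Hb.
  destruct (MVT_gen k a b dk) as [c [Hc1 Hc2]].
  - rewrite Rmin_left, Rmax_right by lra. exact Hd.
  - rewrite Rmin_left, Rmax_right by lra. exact Hc.
  - rewrite Rmin_left, Rmax_right in Hc1 by lra.
    rewrite Hc2. replace (dk c * (b - a) - M * (b - a)) with ((dk c - M) * (b - a)) by ring.
    rewrite Rabs_mult, (Rabs_pos_eq (b - a)) by lra.
    apply Rmult_le_compat_r; [lra|]. apply Hb; lra.
Qed.

Lemma mvt0 (k dk : R -> R) rho L eps k0 : 0 < rho ->
  (forall y, 0 < y <= rho -> is_derive k y (dk y)) ->
  (forall y, 0 < y <= rho -> Rabs (dk y - L) <= eps) ->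
  (forall g : posreal, exists d : posreal, forall y, 0 < y < d -> Rabs (k y - k0) < g) ->
  Rabs (k rho - k0 - L * rho) <= eps * rho.
Proof.
  intros Hr Hd Hb Hl.
  apply le_epsilon. intros g Hg.
  assert (Hg2 : 0 < g / 2) by lra.
  destruct (Hl (mkposreal _ Hg2)) as [d Hd']. simpl in Hd'.
  set (eta := Rmin (Rmin (d/2) (rho/2)) (g / (2 * (Rabs L + 1)))).
  assert (HL : 0 < Rabs L + 1) by (pose proof (Rabs_pos L); lra).
  assert (Heta : 0 < eta).
  { unfold eta. apply Rmin_pos; [apply Rmin_pos|]; try (pose proof (cond_pos d)); try lra.
    apply Rdiv_lt_0_compat; lra. }
  assert (Heta1 : eta <= d/2) by (unfold eta; eapply Rle_trans; [apply Rmin_l|apply Rmin_l]).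
  assert (Heta2 : eta <= rho/2) by (unfold eta; eapply Rle_trans; [apply Rmin_l|apply Rmin_r]).
  assert (Heta3 : eta <= g / (2 * (Rabs L + 1))) by (unfold eta; apply Rmin_r).
  assert (Hm : Rabs (k rho - k eta - L * (rho - eta)) <= eps * (rho - eta)).
  { apply (mvt_bound k dk eta rho L eps); try lra.
    - intros y Hy. apply Hd; lra.
    - intros y Hy. apply (cont_of_derive k y (dk y)). apply Hd; lra.
    - intros y Hy. apply Hb; lra. }
  assert (Hk : Rabs (k eta - k0) < g/2) by (apply Hd'; pose proof (cond_pos d); lra).
  assert (HLe : Rabs L * eta <= g / 2).
  { apply Rle_trans with (Rabs L * (g / (2 * (Rabs L + 1)))).
    - apply Rmult_le_compat_l; [apply Rabs_pos|lra].
    - unfold Rdiv. rewrite Rinv_mult. 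
      apply Rle_trans with (g * / 2 * (Rabs L * / (Rabs L + 1))); [right; field; lra|].
      assert (Rabs L * / (Rabs L + 1) <= 1).
      { apply Rmult_le_reg_r with (Rabs L + 1); [lra|]. rewrite Rmult_assoc, Rinv_l by lra. lra. }
      assert (0 <= Rabs L * / (Rabs L + 1)).
      { apply Rmult_le_pos; [apply Rabs_pos|]. left; apply Rinv_0_lt_compat; lra. }
      nra. }
  assert (Heps : 0 <= eps).
  { specialize (Hb rho ltac:(lra)). pose proof (Rabs_pos (dk rho - L)). lra. }
  replace (k rho - k0 - L * rho) with ((k rho - k eta - L * (rho - eta)) + (k eta - k0) + (- (L * eta))) by ring.
  eapply Rle_trans; [apply Rabs_triang|].
  eapply Rle_trans; [apply Rplus_le_compat; [apply Rabs_triang| right; apply Rabs_Ropp]|].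
  rewrite Rabs_mult, (Rabs_pos_eq eta) by lra.
  assert (0 <= eps * eta) by (apply Rmult_le_pos; lra).
  lra.
Qed.


Lemma between_abs a h c : Rmin a (a+h) <= c <= Rmax a (a+h) -> Rabs (c - a) <= Rabs h.
Proof. unfold Rmin, Rmax; destruct Rle_dec; intros; unfold Rabs; repeat destruct Rcase_abs; lra. Qed.

Lemma between_neq a h c : h <> 0 -> Rmin a (a+h) < c < Rmax a (a+h) -> c <> a.
Proof. unfold Rmin, Rmax; destruct Rle_dec; intros; lra. Qed.

Lemma deriv_from_lim (k d : R -> R) : continuous k 0 ->
  (forall h, h <> 0 -> is_derive k h (d h)) -> continuous d 0 -> is_derive k 0 (d 0).
Proof.
  intros Hk Hd Hc. apply is_derive_Reals. intros eps Heps.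
  destruct (cont1_elim d 0 Hc (mkposreal eps Heps)) as [de Hde]. simpl in Hde.
  exists de. intros h Hh0 Hh.
  destruct (MVT_gen k 0 (0+h) d) as [c [Hc1 Hc2]].
  - intros y Hy. apply Hd. eapply between_neq; eauto.
  - intros y Hy. destruct (Req_dec y 0) as [->|Hy0].
    + apply continuity_pt_filterlim. exact Hk.
    + apply (cont_of_derive k y (d y)). apply Hd; auto.
  - rewrite Hc2. replace ((d c * (0+h-0))/h - d 0) with (d c - d 0) by (field; auto).
    apply Hde. pose proof (between_abs 0 h c Hc1). lra.
Qed.

Lemma lim0_deriv (G Gt : R -> R -> R) (L : R -> R) t0 M :
  (forall u t, 0 < u -> is_derive (fun s => G u s) t (Gt u t)) ->
  (forall t, lim0 G t (L t)) -> lim0 Gt t0 M -> is_derive L t0 M.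
Proof.
  intros Hd HL HM. apply is_derive_Reals. intros eps Heps.
  assert (He2 : 0 < eps / 2) by lra.
  destruct (HM (mkposreal _ He2)) as [de Hde]. simpl in Hde.
  exists de. intros h Hh0 Hh.
  assert (Hc : Rabs (L (t0 + h) - L t0 - M * h) <= eps / 2 * Rabs h).
  { apply le_epsilon. intros g Hg. assert (Hg2 : 0 < g/2) by lra.
    destruct (lim0_fix G (t0+h) (L (t0+h)) (HL _) (mkposreal _ Hg2)) as [d1 Hd1].
    destruct (lim0_fix G t0 (L t0) (HL _) (mkposreal _ Hg2)) as [d2 Hd2]. simpl in *.
    set (u := Rmin de (Rmin d1 d2) / 2).
    assert (0 < Rmin de (Rmin d1 d2)) by (repeat apply Rmin_pos; apply cond_pos).
    pose proof (Rmin_l de (Rmin d1 d2)). pose proof (Rmin_r de (Rmin d1 d2)).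
    pose proof (Rmin_l d1 d2). pose proof (Rmin_r d1 d2).
    assert (Hu : 0 < u) by (unfold u; lra).
    destruct (MVT_gen (fun s => G u s) t0 (t0+h) (Gt u)) as [c [Hc1 Hc2]].
    - intros y Hy. apply Hd; auto.
    - intros y Hy. apply (cont_of_derive _ y (Gt u y)). apply Hd; auto.
    - simpl in Hc2. pose proof (between_abs t0 h c Hc1).
      assert (HH1 : Rabs (Gt u c - M) < eps / 2) by (apply Hde; unfold u; lra).
      assert (HH2 : Rabs (G u (t0 + h) - L (t0 + h)) < g/2) by (apply Hd1; unfold u; lra).
      assert (HH3 : Rabs (G u t0 - L t0) < g/2) by (apply Hd2; unfold u; lra).
      replace (L (t0 + h) - L t0 - M * h) with
        ((G u (t0 + h) - G u t0 - M * (t0 + h - t0)) - (G u (t0 + h) - L (t0 + h)) + (G u t0 - L t0)) by ring.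
      rewrite Hc2. replace (Gt u c * (t0 + h - t0) - M * (t0 + h - t0)) with ((Gt u c - M) * h) by ring.
      eapply Rle_trans; [apply Rabs_triang|].
      eapply Rle_trans; [apply Rplus_le_compat_r; apply Rabs_triang|].
      rewrite Rabs_Ropp, Rabs_mult.
      assert (Rabs (Gt u c - M) * Rabs h <= eps/2 * Rabs h) by (apply Rmult_le_compat_r; [apply Rabs_pos|lra]).
      lra. }
  replace ((L (t0 + h) - L t0) / h - M) with ((L (t0 + h) - L t0 - M * h) / h) by (field; auto).
  unfold Rdiv. rewrite Rabs_mult, Rabs_inv.
  assert (Hh' : 0 < Rabs h) by (apply Rabs_pos_lt; auto).
  apply Rle_lt_trans with (eps/2).
  - apply Rmult_le_reg_r with (Rabs h); auto. rewrite Rmult_assoc, Rinv_l by lra. lra.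
  - lra.
Qed.

Lemma lim_div (chi chir : R -> R -> R) t0 l :
  (forall u t, 0 < u -> is_derive (fun y => chi y t) u (chir u t)) ->
  (forall t, lim0 chi t 0) -> lim0 chir t0 l -> lim0 (fun u v => chi u v / u) t0 l.
Proof.
  intros Hd H0 Hl eps. assert (He2 : 0 < eps / 2) by (pose proof (cond_pos eps); lra).
  destruct (Hl (mkposreal _ He2)) as [de Hde]. simpl in Hde. exists de. intros u v Hu Hv.
  assert (Hm : Rabs (chi u v - 0 - l * u) <= eps/2 * u).
  { apply (mvt0 (fun y => chi y v) (fun y => chir y v)); try lra.
    - intros y Hy. apply Hd. lra.
    - intros y Hy. left. apply Hde; auto. lra.
    - intros g. destruct (lim0_fix chi v 0 (H0 v) g) as [d Hd']. exists d. exact Hd'. }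
  replace (chi u v / u - l) with ((chi u v - 0 - l * u) / u) by (field; lra).
  unfold Rdiv. rewrite Rabs_mult, Rabs_inv, (Rabs_pos_eq u) by lra.
  apply Rle_lt_trans with (eps/2); [|lra].
  apply Rmult_le_reg_r with u; [lra|]. rewrite Rmult_assoc, Rinv_l by lra. lra.
Qed.

Lemma lim_div_sq (chi chir : R -> R -> R) t0 :
  (forall u t, 0 < u -> is_derive (fun y => chi y t) u (chir u t)) ->
  (forall t, lim0 chi t 0) -> lim0 (fun u v => chir u v / u) t0 0 ->
  lim0 (fun u v => chi u v / (u * u)) t0 0.
Proof.
  intros Hd H0 Hl eps. assert (He2 : 0 < eps / 2) by (pose proof (cond_pos eps); lra).
  destruct (Hl (mkposreal _ He2)) as [de Hde]. simpl in Hde. exists de. intros u v Hu Hv.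
  assert (Hm : Rabs (chi u v - 0 - 0 * u) <= (eps/2 * u) * u).
  { apply (mvt0 (fun y => chi y v) (fun y => chir y v)); try lra.
    - intros y Hy. apply Hd. lra.
    - intros y Hy. assert (Hy' : Rabs (chir y v / y - 0) < eps/2) by (apply Hde; auto; lra).
      rewrite Rminus_0_r in *. replace (chir y v) with (chir y v / y * y) by (field; lra).
      rewrite Rabs_mult, (Rabs_pos_eq y) by lra.
      apply Rmult_le_compat; try lra; apply Rabs_pos.
    - intros g. destruct (lim0_fix chi v 0 (H0 v) g) as [d Hd']. exists d. exact Hd'. }
  replace (chi u v / (u * u) - 0) with ((chi u v - 0 - 0 * u) / (u * u)) by (field; lra).
  unfold Rdiv. rewrite Rabs_mult, Rabs_inv, (Rabs_pos_eq (u * u)) by nra.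
  apply Rle_lt_trans with (eps/2); [|lra].
  apply Rmult_le_reg_r with (u * u); [nra|]. rewrite Rmult_assoc, Rinv_l by nra. lra.
Qed.


Notation P4 := (R * R * R * R)%type.

Definition addv (x : R3) (h : R) (e : R3) : R3 :=
  (c1 x + h * c1 e, c2 x + h * c2 e, c3 x + h * c3 e).
Definition dot (x e : R3) : R := c1 x * c1 e + c2 x * c2 e + c3 x * c3 e.

Definition isdx (f : P4 -> R) (e : R3) (z : P4) (l : R) : Prop :=
  is_derive (fun h => f (addv (fst z) h e, snd z)) 0 l.
Definition isdt (f : P4 -> R) (z : P4) (l : R) : Prop :=
  is_derive (fun h => f (fst z, snd z + h)) 0 l.

Lemma plus_scal_sp : forall (z : P4) (e : R3) (h : R), plus z (scal h (e, 0)) = (addv (fst z) h e, snd z).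
Proof.
  intros [[[x1 x2] x3] t] [[e1 e2] e3] h.
  change (plus (x1,x2,x3,t) (scal h (e1,e2,e3,0))) with ((x1 + h*e1, x2 + h*e2, x3 + h*e3), t + h*0).
  unfold addv, c1,c2,c3; simpl. apply injective_projections; simpl; [reflexivity|ring].
Qed.

Lemma plus_scal_t : forall (z : P4) h, plus z (scal h (0,0,0,1)) = (fst z, snd z + h).
Proof.
  intros [[[x1 x2] x3] t] h.
  change (plus (x1,x2,x3,t) (scal h (0,0,0,1))) with ((x1 + h*0, x2 + h*0, x3 + h*0), t + h*1).
  simpl. f_equal; [f_equal; [f_equal|]|]; ring.
Qed.

Lemma inB3 e : In e B3 -> e = (1,0,0) \/ e = (0,1,0) \/ e = (0,0,1).
Proof. simpl. intuition. Qed.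

Lemma inB4 v : In v B4 -> (exists e, In e B3 /\ v = (e, 0)) \/ v = (0,0,0,1).
Proof.
  simpl. intros [H|[H|[H|[H|[]]]]]; subst.
  - left. exists (1,0,0). simpl; auto.
  - left. exists (0,1,0). simpl; auto.
  - left. exists (0,0,1). simpl; auto.
  - right; reflexivity.
Qed.

Lemma shift_d (k : R -> R) (t l : R) : is_derive k t l -> is_derive (fun h => k (t + h)) 0 l.
Proof.
  intros H. apply is_derive_Reals. apply is_derive_Reals in H. intros eps He.
  destruct (H eps He) as [d Hd]. exists d. intros h Hh0 Hh.
  replace (t + (0 + h)) with (t + h) by ring. rewrite Rplus_0_r. apply Hd; auto.
Qed.

Lemma shift_d_inv (k : R -> R) (t l : R) : is_derive (fun h => k (t + h)) 0 l -> is_derive k t l.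
Proof.
  intros H. apply is_derive_Reals. apply is_derive_Reals in H. intros eps He.
  destruct (H eps He) as [d Hd]. exists d. intros h Hh0 Hh.
  specialize (Hd h Hh0 Hh). simpl in Hd.
  replace (t + (0 + h)) with (t + h) in Hd by ring. rewrite Rplus_0_r in Hd. exact Hd.
Qed.

Lemma is_derive_eq (f : R -> R) (x l l' : R) : is_derive f x l -> l = l' -> is_derive f x l'.
Proof. intros H ->; exact H. Qed.

Section ContR.
Context {U : UniformSpace}.
Lemma cont_mult (f g : U -> R) x : continuous f x -> continuous g x -> continuous (fun y => f y * g y) x.
Proof. intros. exact (continuous_mult (K:=R_AbsRing) f g x H H0). Qed.
Lemma cont_plus (f g : U -> R) x : continuous f x -> continuous g x -> continuous (fun y => f y + g y) x.
Proof. intros. exact (continuous_plus (V:=R_NormedModule) f g x H H0). Qed.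
Lemma cont_const (c : R) x : continuous (fun _ : U => c) x.
Proof. apply continuous_const. Qed.
Lemma cont_pair {V W : UniformSpace} (f : U -> V) (g : U -> W) x :
  continuous f x -> continuous g x -> continuous (fun y => (f y, g y)) x.
Proof.
  intros Hf Hg. apply (continuous_comp_2 f g pair x Hf Hg).
  apply (continuous_ext (fun p => p)). { intros [a b]; reflexivity. } apply continuous_id.
Qed.
End ContR.

Lemma cont_c1 (x : R3) : continuous c1 x.
Proof. destruct x as [[a b] c]. unfold c1. apply (continuous_comp fst fst). apply continuous_fst. apply continuous_fst. Qed.
Lemma cont_c2 (x : R3) : continuous c2 x.
Proof. destruct x as [[a b] c]. unfold c2. apply (continuous_comp fst snd). apply continuous_fst. apply continuous_snd. Qed.
Lemma cont_c3 (x : R3) : continuous c3 x.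
Proof. destruct x as [[a b] c]. unfold c3. apply continuous_snd. Qed.

Lemma cont_dot (x u : R3) : continuous (fun y => dot y u) x.
Proof.
  unfold dot. repeat apply cont_plus; apply cont_mult; try apply cont_const.
  apply cont_c1. apply cont_c2. apply cont_c3.
Qed.

Lemma cont_norm3 (x : R3) : continuous norm3 x.
Proof.
  unfold norm3. apply (continuous_comp (fun y => c1 y ^ 2 + c2 y ^ 2 + c3 y ^ 2) sqrt).
  - simpl. repeat apply cont_plus; repeat apply cont_mult; try apply cont_const;
    try apply cont_c1; try apply cont_c2; try apply cont_c3.
  - apply continuous_sqrt.
Qed.

Lemma cont_fst4 (z : P4) : continuous (fun z : P4 => fst z) z.
Proof. destruct z. apply continuous_fst. Qed.
Lemma cont_snd4 (z : P4) : continuous (fun z : P4 => snd z) z.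
Proof. destruct z. apply continuous_snd. Qed.

Lemma norm3_pos x : 0 <= norm3 x.
Proof. apply sqrt_pos. Qed.

Lemma sum_sq_pos x : 0 <= c1 x ^ 2 + c2 x ^ 2 + c3 x ^ 2.
Proof. nra. Qed.

Lemma norm3_zero x : norm3 x = 0 -> x = (0,0,0).
Proof.
  unfold norm3. intros H. apply sqrt_eq_0 in H; [|apply sum_sq_pos].
  destruct x as [[a b] c]. unfold c1, c2, c3 in H; simpl in H.
  assert (a = 0) by nra. assert (b = 0) by nra. assert (c = 0) by nra. subst; reflexivity.
Qed.

Lemma norm3_sq x : norm3 x * norm3 x = c1 x ^ 2 + c2 x ^ 2 + c3 x ^ 2.
Proof. unfold norm3. apply sqrt_sqrt. apply sum_sq_pos. Qed.

Lemma abs_le_norm3_1 x : Rabs (c1 x) <= norm3 x.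
Proof.
  rewrite <- (Rabs_pos_eq (norm3 x)) by apply norm3_pos. apply (Rsqr_le_abs_0 (c1 x) (norm3 x)).
  unfold Rsqr. rewrite norm3_sq. nra.
Qed.
Lemma abs_le_norm3_2 x : Rabs (c2 x) <= norm3 x.
Proof.
  rewrite <- (Rabs_pos_eq (norm3 x)) by apply norm3_pos. apply (Rsqr_le_abs_0 (c2 x) (norm3 x)).
  unfold Rsqr. rewrite norm3_sq. nra.
Qed.
Lemma abs_le_norm3_3 x : Rabs (c3 x) <= norm3 x.
Proof.
  rewrite <- (Rabs_pos_eq (norm3 x)) by apply norm3_pos. apply (Rsqr_le_abs_0 (c3 x) (norm3 x)).
  unfold Rsqr. rewrite norm3_sq. nra.
Qed.

Lemma dot_B3 x u : In u B3 -> Rabs (dot x u) <= norm3 x.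
Proof.
  intros Hu. apply inB3 in Hu. unfold dot.
  pose proof (abs_le_norm3_1 x). pose proof (abs_le_norm3_2 x). pose proof (abs_le_norm3_3 x).
  destruct x as [[a b] c].
  destruct Hu as [Hu|[Hu|Hu]]; subst u; unfold c1, c2, c3 in *; simpl in *.
  - replace (a * 1 + b * 0 + c * 0) with a by ring. auto.
  - replace (a * 0 + b * 1 + c * 0) with b by ring. auto.
  - replace (a * 0 + b * 0 + c * 1) with c by ring. auto.
Qed.

Lemma norm3_le_sum x : norm3 x <= Rabs (c1 x) + Rabs (c2 x) + Rabs (c3 x).
Proof.
  apply Rsqr_incr_0_var; [|pose proof (Rabs_pos (c1 x)); pose proof (Rabs_pos (c2 x)); pose proof (Rabs_pos (c3 x)); lra].
  unfold Rsqr. rewrite norm3_sq.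
  pose proof (Rabs_pos (c1 x)). pose proof (Rabs_pos (c2 x)). pose proof (Rabs_pos (c3 x)).
  pose proof (pow2_abs (c1 x)). pose proof (pow2_abs (c2 x)). pose proof (pow2_abs (c3 x)).
  nra.
Qed.

Lemma addv0 x e : addv x 0 e = x.
Proof. destruct x as [[a b] c]. unfold addv, c1, c2, c3; simpl. f_equal; [f_equal|]; ring. Qed.

Lemma addv_addv x e h h' : addv (addv x h e) h' e = addv x (h + h') e.
Proof. destruct x as [[a b] c]. unfold addv, c1, c2, c3; simpl. f_equal; [f_equal|]; ring. Qed.

Lemma norm3_addv0 e h : In e B3 -> norm3 (addv (0,0,0) h e) = Rabs h.
Proof.
  intros He. apply inB3 in He. unfold norm3, addv.
  destruct He as [He|[He|He]]; subst e; unfold c1, c2, c3; simpl;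
  rewrite <- sqrt_Rsqr_abs; f_equal; unfold Rsqr; ring.
Qed.

Lemma is_derive_norm3 x e : norm3 x <> 0 ->
  is_derive (fun h => norm3 (addv x h e)) 0 (dot x e / norm3 x).
Proof.
  intros Hn.
  assert (Hp : 0 < c1 x ^ 2 + c2 x ^ 2 + c3 x ^ 2).
  { destruct (sum_sq_pos x) as [H|H]; auto. exfalso. apply Hn. unfold norm3. rewrite <- H. apply sqrt_0. }
  unfold norm3, addv, dot. destruct x as [[a b] c]. destruct e as [[e1 e2] e3].
  unfold c1, c2, c3 in *; simpl in *.
  auto_derive.
  - replace ((a + 0 * e1) * ((a + 0 * e1) * 1) + (b + 0 * e2) * ((b + 0 * e2) * 1) + (c + 0 * e3) * ((c + 0 * e3) * 1))
      with (a ^ 2 + b ^ 2 + c ^ 2) by ring. lra.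
  - replace ((a + 0 * e1) * ((a + 0 * e1) * 1) + (b + 0 * e2) * ((b + 0 * e2) * 1) + (c + 0 * e3) * ((c + 0 * e3) * 1))
      with (a ^ 2 + b ^ 2 + c ^ 2) by ring. replace (a * (a * 1) + b * (b * 1) + c * (c * 1)) with (a^2+b^2+c^2) by ring.
      assert (0 < sqrt (a^2+b^2+c^2)) by (apply sqrt_lt_R0; nra). field. lra.
Qed.

Lemma locally_norm_nz x e : norm3 x <> 0 -> locally 0 (fun h => norm3 (addv x h e) <> 0).
Proof.
  intros Hn. pose proof (is_derive_norm3 x e Hn) as Hd.
  assert (Hc : continuous (fun h => norm3 (addv x h e)) 0).
  { apply (ex_derive_continuous (K:=R_AbsRing) (V:=R_NormedModule)). eexists; exact Hd. }
  assert (Hp : 0 < Rabs (norm3 x)) by (apply Rabs_pos_lt; auto).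
  apply (Hc (fun y => y <> 0)). rewrite addv0.
  exists (mkposreal _ Hp). intros y Hy. change (Rabs (y - norm3 x) < Rabs (norm3 x)) in Hy.
  intros ->. rewrite Rminus_0_l, Rabs_Ropp in Hy. lra.
Qed.

Lemma norm3_0 : norm3 (0,0,0) = 0.
Proof. unfold norm3, c1, c2, c3. cbn [fst snd]. replace (0 ^ 2 + 0 ^ 2 + 0 ^ 2) with 0 by ring. apply sqrt_0. Qed.

Definition rad (g : R -> R -> R) (m : R3 -> R) (F0 : R -> R) (z : P4) : R :=
  if Req_EM_T (norm3 (fst z)) 0 then F0 (snd z) else g (norm3 (fst z)) (snd z) * m (fst z).

Lemma rad_nz g m F0 x t : norm3 x <> 0 -> rad g m F0 (x,t) = g (norm3 x) t * m x.
Proof. intros H. unfold rad; simpl. destruct Req_EM_T; [contradiction|reflexivity]. Qed.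
Lemma rad_z g m F0 x t : norm3 x = 0 -> rad g m F0 (x,t) = F0 t.
Proof. intros H. unfold rad; simpl. destruct Req_EM_T; [reflexivity|contradiction]. Qed.

Lemma rad_dx (g : R -> R -> R) (m : R3 -> R) (F0 : R -> R) (x : R3) (t : R) (e : R3) (gr dm : R) : norm3 x <> 0 ->
  is_derive (fun y => g y t) (norm3 x) gr ->
  is_derive (fun h => m (addv x h e)) 0 dm ->
  isdx (rad g m F0) e (x,t) (gr * (dot x e / norm3 x) * m x + g (norm3 x) t * dm).
Proof.
  intros Hn Hg Hm. unfold isdx; simpl.
  apply is_derive_ext_loc with (fun h => g (norm3 (addv x h e)) t * m (addv x h e)).
  { apply filter_imp with (2 := locally_norm_nz x e Hn). intros h Hh. rewrite rad_nz; auto. }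
  assert (Hc : is_derive (fun h => g (norm3 (addv x h e)) t) 0 (dot x e / norm3 x * gr)).
  { apply (is_derive_comp (fun y => g y t) (fun h => norm3 (addv x h e))).
    - rewrite addv0. exact Hg.
    - apply is_derive_norm3; auto. }
  pose proof (is_derive_mult _ _ _ _ _ Hc Hm ltac:(intros; apply Rmult_comm)) as H.
  simpl in H. rewrite addv0 in H. eapply is_derive_eq; [exact H|].
  change (plus (mult (dot x e / norm3 x * gr) (m x)) (mult (g (norm3 x) t) dm)) with
    ((dot x e / norm3 x * gr) * (m x) + (g (norm3 x) t) * dm). ring.
Qed.

Lemma rad_dt (g : R -> R -> R) (m : R3 -> R) (F0 : R -> R) (x : R3) (t gt : R) : norm3 x <> 0 ->
  is_derive (fun s => g (norm3 x) s) t gt -> isdt (rad g m F0) (x,t) (gt * m x).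
Proof.
  intros Hn Hg. unfold isdt; simpl.
  apply is_derive_ext with (fun h => g (norm3 x) (t + h) * m x).
  { intros h. rewrite rad_nz; auto. }
  pose proof (is_derive_scal (fun h => g (norm3 x) (t + h)) 0 (m x) gt (shift_d _ _ _ Hg)) as H.
  eapply is_derive_ext; [|eapply is_derive_eq; [exact H|]]; simpl.
  - intros; ring.
  - ring.
Qed.

Lemma rad_dt0 (g : R -> R -> R) (m : R3 -> R) (F0 : R -> R) (x : R3) (t l : R) : norm3 x = 0 -> is_derive F0 t l -> isdt (rad g m F0) (x,t) l.
Proof.
  intros Hn Hg. unfold isdt; simpl.
  apply is_derive_ext with (fun h => F0 (t + h)).
  { intros h. rewrite rad_z; auto. }
  apply shift_d; auto.
Qed.

Lemma cont_line x0 e t : continuous (fun h : R => ((addv x0 h e, t) : P4)) 0.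
Proof.
  apply cont_pair; [|apply cont_const].
  unfold addv. change (continuous (fun h : R => ((c1 x0 + h * c1 e, c2 x0 + h * c2 e, c3 x0 + h * c3 e) : R * R * R)) 0). apply cont_pair; [apply cont_pair|]; apply cont_plus; try apply cont_const;
  apply cont_mult; try apply cont_const; apply continuous_id.
Qed.

Lemma deriv_at0 (G D : P4 -> R) e x0 t : In e B3 -> x0 = (0,0,0) ->
  (forall z, norm3 (fst z) <> 0 -> isdx G e z (D z)) ->
  continuous G (x0,t) -> continuous D (x0,t) -> isdx G e (x0,t) (D (x0,t)).
Proof.
  intros He Hx0 Hd HG HD. unfold isdx; simpl.
  assert (Hk : continuous (fun h => G (addv x0 h e, t)) 0).
  { apply (continuous_comp (fun h => (addv x0 h e, t)) G). apply cont_line. rewrite addv0. exact HG. }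
  assert (Hdc : continuous (fun h => D (addv x0 h e, t)) 0).
  { apply (continuous_comp (fun h => (addv x0 h e, t)) D). apply cont_line. rewrite addv0. exact HD. }
  pose proof (deriv_from_lim (fun h => G (addv x0 h e, t)) (fun h => D (addv x0 h e, t)) Hk) as H.
  simpl in H. rewrite addv0 in H. apply H; auto.
  intros h Hh. apply shift_d_inv.
  assert (Hn : norm3 (addv x0 h e) <> 0).
  { subst x0. rewrite norm3_addv0 by auto. apply Rabs_no_R0; auto. }
  specialize (Hd (addv x0 h e, t) Hn). unfold isdx in Hd; simpl in Hd.
  eapply is_derive_ext; [|exact Hd]. intros h'. simpl. rewrite addv_addv. reflexivity.
Qed.

Lemma rad_cont g m F0 x t : norm3 x <> 0 -> continuity_2d_pt g (norm3 x) t -> continuous m x ->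
  continuous (rad g m F0) (x,t).
Proof.
  intros Hn Hg Hm.
  apply continuous_ext_loc with (fun z => g (norm3 (fst z)) (snd z) * m (fst z)).
  - assert (Hc : continuous (fun z : P4 => norm3 (fst z)) (x,t)).
    { apply (continuous_comp (fun z : P4 => fst z) norm3). apply cont_fst4. apply cont_norm3. }
    assert (Hp : 0 < Rabs (norm3 x)) by (apply Rabs_pos_lt; auto).
    assert (Hl : locally (norm3 (fst (x,t))) (fun y => y <> 0)).
    { exists (mkposreal _ Hp). intros y Hy. change (Rabs (y - norm3 x) < Rabs (norm3 x)) in Hy.
      intros ->. rewrite Rminus_0_l, Rabs_Ropp in Hy. lra. }
    pose proof (Hc _ Hl) as Hc'.
    apply (filter_imp (fun z : P4 => norm3 (fst z) <> 0)); [|exact Hc'].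
    intros [y s] Hz. simpl in Hz. simpl. rewrite rad_nz; auto.
  - apply (cont_mult (fun z : P4 => g (norm3 (fst z)) (snd z)) (fun z : P4 => m (fst z))).
    + apply (continuous_comp_2 (fun z : P4 => norm3 (fst z)) (fun z : P4 => snd z) g).
      * apply (continuous_comp (fun z : P4 => fst z) norm3). apply cont_fst4. apply cont_norm3.
      * apply cont_snd4.
      * simpl. apply continuity_2d_pt_filterlim. exact Hg.
    + apply (continuous_comp (fun z : P4 => fst z) m). apply cont_fst4. exact Hm.
Qed.

Lemma cont4_intro (f : P4 -> R) z :
  (forall eps : posreal, exists d : posreal, forall z' : P4,
     Rabs (c1 (fst z') - c1 (fst z)) < d -> Rabs (c2 (fst z') - c2 (fst z)) < d ->
     Rabs (c3 (fst z') - c3 (fst z)) < d -> Rabs (snd z' - snd z) < d ->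
     Rabs (f z' - f z) < eps) -> continuous f z.
Proof.
  intros H P [eps HP]. destruct (H eps) as [d Hd]. exists d. intros z' Hz'.
  apply HP. destruct z as [[[a b] c] t]. destruct z' as [[[a' b'] c'] t'].
  destruct Hz' as [[[H1 H2] H3] H4]. apply Hd; assumption.
Qed.

Lemma rad_cont0 g m F0 x0 t0 : x0 = (0,0,0) -> continuous F0 t0 ->
  (forall eps : posreal, exists d : posreal, forall x t, 0 < norm3 x < d -> Rabs (t - t0) < d ->
     Rabs (g (norm3 x) t * m x - F0 t0) < eps) ->
  continuous (rad g m F0) (x0,t0).
Proof.
  intros Hx0 HF Hb. apply cont4_intro. intros eps.
  destruct (Hb eps) as [d1 Hd1]. destruct (cont1_elim F0 t0 HF eps) as [d2 Hd2].
  assert (Hm : 0 < Rmin (d1/3) d2) by (apply Rmin_pos; [pose proof (cond_pos d1); lra| apply cond_pos]).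
  exists (mkposreal _ Hm). simpl. intros [x t] H1 H2 H3 H4. simpl in *.
  pose proof (Rmin_l (d1/3) d2). pose proof (Rmin_r (d1/3) d2).
  assert (Hz0 : norm3 x0 = 0) by (subst; apply norm3_0).
  rewrite (rad_z _ _ _ x0) by auto.
  subst x0. change (c1 (0,0,0)) with 0 in H1. change (c2 (0,0,0)) with 0 in H2. change (c3 (0,0,0)) with 0 in H3.
  rewrite Rminus_0_r in H1, H2, H3.
  destruct (Req_dec (norm3 x) 0) as [Hz|Hz].
  - rewrite rad_z by auto. apply Hd2. lra.
  - rewrite rad_nz by auto. apply Hd1; [|lra].
    pose proof (norm3_pos x). pose proof (norm3_le_sum x). split; lra.
Qed.

Lemma bound_of_lim0 g m t0 k : lim0 (fun u v => g u v * u ^ k) t0 0 ->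
  (forall x, Rabs (m x) <= norm3 x ^ k) ->
  forall eps : posreal, exists d : posreal, forall x t, 0 < norm3 x < d -> Rabs (t - t0) < d ->
     Rabs (g (norm3 x) t * m x - 0) < eps.
Proof.
  intros H Hm eps. destruct (H eps) as [d Hd]. exists d. intros x t Hx Ht.
  specialize (Hd _ _ Hx Ht). rewrite Rminus_0_r in *. rewrite Rabs_mult in *.
  eapply Rle_lt_trans; [|exact Hd]. apply Rmult_le_compat_l; [apply Rabs_pos|].
  rewrite (Rabs_pos_eq (norm3 x ^ k)); auto. apply pow_le. apply norm3_pos.
Qed.

Lemma bound_of_lim0_1 g t0 l : lim0 g t0 l ->
  forall eps : posreal, exists d : posreal, forall x t, 0 < norm3 x < d -> Rabs (t - t0) < d ->
     Rabs (g (norm3 x) t * 1 - l) < eps.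
Proof.
  intros H eps. destruct (H eps) as [d Hd]. exists d. intros x t Hx Ht. rewrite Rmult_1_r. auto.
Qed.


Definition isd (f : P4 -> R) (v : P4) (z : P4) (l : R) : Prop :=
  is_derive (fun h => f (plus z (scal h v))) 0 l.

Lemma isd_sp f e z l : isdx f e z l -> isd f (e,0) z l.
Proof. unfold isd, isdx. intros H. eapply is_derive_ext; [|exact H]. intros h. simpl. rewrite plus_scal_sp. reflexivity. Qed.
Lemma isd_t f z l : isdt f z l -> isd f (0,0,0,1) z l.
Proof. unfold isd, isdt. intros H. eapply is_derive_ext; [|exact H]. intros h. simpl. rewrite plus_scal_t. reflexivity. Qed.

Definition C1f (f : P4 -> R) : Prop :=
  (forall z, continuous f z) /\
  forall v, In v B4 -> exists D : P4 -> R, (forall z, isd f v z (D z)) /\ forall z, continuous D z.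

Lemma get_dir (f : P4 -> R) (P : (P4 -> R) -> Prop) :
  (forall e, In e B3 -> exists D, (forall z, isdx f e z (D z)) /\ P D) ->
  (exists D, (forall z, isdt f z (D z)) /\ P D) ->
  forall v, In v B4 -> exists D, (forall z, isd f v z (D z)) /\ P D.
Proof.
  intros Hs Ht v Hv. destruct (inB4 v Hv) as [[e [He ->]] | ->].
  - destruct (Hs e He) as [D [HD HP]]. exists D. split; auto. intros z; apply isd_sp; auto.
  - destruct Ht as [D [HD HP]]. exists D. split; auto. intros z; apply isd_t; auto.
Qed.

Lemma C1f_intro f : (forall z, continuous f z) ->
  (forall e, In e B3 -> exists D, (forall z, isdx f e z (D z)) /\ forall z, continuous D z) ->
  (exists D, (forall z, isdt f z (D z)) /\ forall z, continuous D z) -> C1f f.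
Proof. intros Hc Hs Ht. split; auto. apply get_dir; auto. Qed.

Lemma dirD_eq f v D : (forall z, isd f v z (D z)) -> forall z, dirD f v z = D z.
Proof. intros H z. unfold dirD. apply is_derive_unique. apply H. Qed.

Lemma C2_intro f : (forall z, continuous f z) ->
  (forall e, In e B3 -> exists D, (forall z, isdx f e z (D z)) /\ C1f D) ->
  (exists D, (forall z, isdt f z (D z)) /\ C1f D) -> C2 B4 f.
Proof.
  intros Hc Hs Ht. pose proof (get_dir f C1f Hs Ht) as G.
  split; [auto|split].
  - intros v Hv. destruct (G v Hv) as [D [HD [HDc _]]]. split.
    + intros z. exists (D z). apply HD.
    + intros z. apply continuous_ext with D; auto. intros; symmetry; apply dirD_eq; auto.
  - intros v w Hv Hw. destruct (G v Hv) as [D [HD [_ HD2]]].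
    destruct (HD2 w Hw) as [D' [HD' HD'c]].
    assert (E : dirD f v = D) by (apply functional_extensionality; apply dirD_eq; auto).
    rewrite E. split.
    + intros z. exists (D' z). apply HD'.
    + intros z. apply continuous_ext with D'; auto. intros; symmetry; apply dirD_eq; auto.
Qed.

Lemma C1f_ext f g : (forall z, f z = g z) -> C1f f -> C1f g.
Proof. intros E H. replace g with f; auto. apply functional_extensionality; auto. Qed.

Lemma C1f_plus f g : C1f f -> C1f g -> C1f (fun z => f z + g z).
Proof.
  intros [Hf1 Hf2] [Hg1 Hg2]. split.
  - intros z. apply cont_plus; auto.
  - intros v Hv. destruct (Hf2 v Hv) as [D1 [H1 C1]]. destruct (Hg2 v Hv) as [D2 [H2 C2]].
    exists (fun z => D1 z + D2 z). split.
    + intros z. unfold isd. apply (is_derive_plus (V:=R_NormedModule) _ _ _ _ _ (H1 z) (H2 z)).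
    + intros z. apply cont_plus; auto.
Qed.

Lemma C1f_scal c f : C1f f -> C1f (fun z => c * f z).
Proof.
  intros [Hf1 Hf2]. split.
  - intros z. apply cont_mult; auto. apply cont_const.
  - intros v Hv. destruct (Hf2 v Hv) as [D1 [H1 C1]].
    exists (fun z => c * D1 z). split.
    + intros z. unfold isd. apply is_derive_scal. apply H1.
    + intros z. apply cont_mult; auto. apply cont_const.
Qed.

Lemma dot_deriv x e u : is_derive (fun h => dot (addv x h e) u) 0 (dot e u).
Proof. destruct x as [[a b] c]; destruct e as [[e1 e2] e3]; destruct u as [[u1 u2] u3].
  unfold dot, addv, c1, c2, c3; simpl. auto_derive; auto. ring. Qed.

Definition mono1 (u : R3) (x : R3) : R := dot x u.
Definition mono2 (e u : R3) (x : R3) : R := dot x e * dot x u.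
Definition mono3 (e' e u : R3) (x : R3) : R := dot x e' * (dot x e * dot x u).
Definition mono0 (x : R3) : R := 1.

Lemma mono1_bound u x : In u B3 -> Rabs (mono1 u x) <= norm3 x ^ 1.
Proof. intros. rewrite pow_1. apply dot_B3; auto. Qed.
Lemma mono2_bound e u x : In e B3 -> In u B3 -> Rabs (mono2 e u x) <= norm3 x ^ 2.
Proof.
  intros. unfold mono2. rewrite Rabs_mult. simpl. rewrite Rmult_1_r.
  apply Rmult_le_compat; try apply Rabs_pos; apply dot_B3; auto.
Qed.
Lemma mono3_bound e' e u x : In e' B3 -> In e B3 -> In u B3 -> Rabs (mono3 e' e u x) <= norm3 x ^ 3.
Proof.
  intros. unfold mono3. rewrite !Rabs_mult. simpl. rewrite Rmult_1_r.
  apply Rmult_le_compat; try apply Rabs_pos; try apply dot_B3; auto.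
  - apply Rmult_le_pos; apply Rabs_pos.
  - apply Rmult_le_compat; try apply Rabs_pos; apply dot_B3; auto.
Qed.

Lemma mono1_deriv u x e : is_derive (fun h => mono1 u (addv x h e)) 0 (dot e u).
Proof. apply dot_deriv. Qed.
Lemma mono2_deriv e u x e' : is_derive (fun h => mono2 e u (addv x h e')) 0 (dot e' e * dot x u + dot x e * dot e' u).
Proof.
  unfold mono2. pose proof (is_derive_mult _ _ _ _ _ (dot_deriv x e' e) (dot_deriv x e' u) ltac:(intros; apply Rmult_comm)) as H.
  simpl in H. rewrite addv0 in H. eapply is_derive_eq; [exact H|]. reflexivity.
Qed.
Lemma mono0_deriv x e : is_derive (fun h => mono0 (addv x h e)) 0 0.
Proof. unfold mono0. apply (is_derive_const (K:=R_AbsRing) (V:=R_NormedModule)). Qed.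

Lemma mono1_cont u x : continuous (mono1 u) x.
Proof. apply cont_dot. Qed.
Lemma mono2_cont e u x : continuous (mono2 e u) x.
Proof. unfold mono2. apply (cont_mult (fun y => dot y e) (fun y => dot y u)); apply cont_dot. Qed.
Lemma mono3_cont e' e u x : continuous (mono3 e' e u) x.
Proof. unfold mono3. apply (cont_mult (fun y => dot y e') (fun y => dot y e * dot y u)); [apply cont_dot|].
  apply (cont_mult (fun y => dot y e) (fun y => dot y u)); apply cont_dot. Qed.
Lemma mono0_cont x : continuous mono0 x.
Proof. apply cont_const. Qed.


Ltac c2d :=
  unfold Rdiv;
  repeat first
    [ apply continuity_2d_pt_const
    | apply continuity_2d_pt_id1
    | apply continuity_2d_pt_id2
    | apply continuity_2d_pt_plus
    | apply continuity_2d_pt_minus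
    | apply continuity_2d_pt_mult
    | apply continuity_2d_pt_opp
    | (apply continuity_2d_pt_inv; [|try (apply Rgt_not_eq, Rlt_gt; repeat apply Rmult_lt_0_compat; lra)]) ].

Lemma rad_cont_all (g : R -> R -> R) (m : R3 -> R) k :
  (forall u t, 0 < u -> continuity_2d_pt g u t) -> (forall x, continuous m x) ->
  (forall x, Rabs (m x) <= norm3 x ^ k) ->
  (forall t, lim0 (fun u v => g u v * u ^ k) t 0) ->
  forall z, continuous (rad g m (fun _ => 0)) z.
Proof.
  intros Hg Hm Hb Hl [x t]. destruct (Req_dec (norm3 x) 0) as [Hz|Hz].
  - apply rad_cont0. apply norm3_zero; auto. apply cont_const.
    apply bound_of_lim0 with k; auto.
  - apply rad_cont; auto. apply Hg. pose proof (norm3_pos x). lra.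
Qed.

Lemma rad_cont_all1 (g : R -> R -> R) (F0 : R -> R) :
  (forall u t, 0 < u -> continuity_2d_pt g u t) ->
  (forall t, lim0 g t (F0 t)) ->
  forall z, continuous (rad g mono0 F0) z.
Proof.
  intros Hg Hl [x t]. destruct (Req_dec (norm3 x) 0) as [Hz|Hz].
  - apply rad_cont0. apply norm3_zero; auto. apply (lim0_cont g F0 Hl).
    apply bound_of_lim0_1; auto.
  - apply rad_cont; auto. apply Hg. pose proof (norm3_pos x). lra. apply mono0_cont.
Qed.

Definition Wg (chi : R -> R -> R) (u t : R) : R := chi u t / u.
Definition Ag (chi chir : R -> R -> R) (u t : R) : R := (u * chir u t - chi u t) / (u * u * u).

Lemma Wg_c2d (chi : R -> R -> R) (u t : R) : 0 < u -> continuity_2d_pt chi u t -> continuity_2d_pt (Wg chi) u t.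
Proof. intros Hu Hc. unfold Wg. c2d. exact Hc. Qed.

Lemma Ag_c2d (chi chir : R -> R -> R) (u t : R) : 0 < u -> continuity_2d_pt chi u t -> continuity_2d_pt chir u t ->
  continuity_2d_pt (Ag chi chir) u t.
Proof. intros Hu Hc Hr. unfold Ag. c2d; auto. Qed.

Lemma W_cont (chi : R -> R -> R) (u0 : R3) : In u0 B3 ->
  (forall u t, 0 < u -> continuity_2d_pt chi u t) -> (forall t, lim0 chi t 0) ->
  forall z, continuous (rad (Wg chi) (mono1 u0) (fun _ => 0)) z.
Proof.
  intros Hu0 Hc Hl. apply rad_cont_all with 1%nat.
  - intros; apply Wg_c2d; auto.
  - apply mono1_cont.
  - intros; apply mono1_bound; auto.
  - intros t. apply lim0_ext with chi; auto. intros u v Hu. unfold Wg. field. lra.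
Qed.

Lemma W_dt (chi chit : R -> R -> R) (u0 : R3) :
  (forall u t, 0 < u -> is_derive (fun s => chi u s) t (chit u t)) ->
  forall z, isdt (rad (Wg chi) (mono1 u0) (fun _ => 0)) z (rad (Wg chit) (mono1 u0) (fun _ => 0) z).
Proof.
  intros Hd [x t]. destruct (Req_dec (norm3 x) 0) as [Hz|Hz].
  - rewrite rad_z by auto. apply rad_dt0; auto. apply (is_derive_const (K:=R_AbsRing) (V:=R_NormedModule)).
  - rewrite rad_nz by auto. apply rad_dt; auto. unfold Wg.
    assert (Hp : 0 < norm3 x) by (pose proof (norm3_pos x); lra).
    auto_derive.
    + repeat split; try lra; try (eexists; apply Hd; lra).
    + rewrite (is_derive_unique _ _ _ (Hd _ _ Hp)). field. lra.
Qed.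

Definition DW (chi chir : R -> R -> R) (l : R -> R) (e u0 : R3) (z : P4) : R :=
  rad (Ag chi chir) (mono2 e u0) (fun _ => 0) z + dot e u0 * rad (Wg chi) mono0 l z.

Lemma DW_cont (chi chir : R -> R -> R) (l : R -> R) (e u0 : R3) : In e B3 -> In u0 B3 ->
  (forall u t, 0 < u -> continuity_2d_pt chi u t) ->
  (forall u t, 0 < u -> continuity_2d_pt chir u t) ->
  (forall u t, 0 < u -> is_derive (fun y => chi y t) u (chir u t)) ->
  (forall t, lim0 chi t 0) -> (forall t, lim0 chir t (l t)) ->
  forall z, continuous (DW chi chir l e u0) z.
Proof.
  intros He Hu0 Hc Hcr Hd Hl Hlr z. unfold DW.
  apply (cont_plus (fun z => rad (Ag chi chir) (mono2 e u0) (fun _ => 0) z) (fun z => dot e u0 * rad (Wg chi) mono0 l z)).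
  - apply rad_cont_all with 2%nat.
    + intros; apply Ag_c2d; auto.
    + apply mono2_cont.
    + intros; apply mono2_bound; auto.
    + intros t. replace 0 with (l t - l t) by ring.
      apply lim0_ext with (fun u v => chir u v - chi u v / u).
      * intros u v Hu. unfold Ag. simpl. field. lra.
      * apply lim0_minus; auto. apply lim_div with chir; auto.
  - apply (cont_mult (fun _ => dot e u0) (fun z => rad (Wg chi) mono0 l z)); [apply cont_const|].
    apply rad_cont_all1.
    + intros; apply Wg_c2d; auto.
    + intros t. apply lim_div with chir; auto.
Qed.

Lemma W_dx (chi chir : R -> R -> R) (l : R -> R) (e u0 : R3) : In e B3 -> In u0 B3 ->
  (forall u t, 0 < u -> continuity_2d_pt chi u t) ->
  (forall u t, 0 < u -> continuity_2d_pt chir u t) ->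
  (forall u t, 0 < u -> is_derive (fun y => chi y t) u (chir u t)) ->
  (forall t, lim0 chi t 0) -> (forall t, lim0 chir t (l t)) ->
  forall z, isdx (rad (Wg chi) (mono1 u0) (fun _ => 0)) e z (DW chi chir l e u0 z).
Proof.
  intros He Hu0 Hc Hcr Hd Hl Hlr.
  assert (Hnz : forall z, norm3 (fst z) <> 0 -> isdx (rad (Wg chi) (mono1 u0) (fun _ => 0)) e z (DW chi chir l e u0 z)).
  { intros [x t] Hz. simpl in Hz.
    assert (Hp : 0 < norm3 x) by (pose proof (norm3_pos x); lra).
    eapply (is_derive_eq _ _ _ _ (rad_dx (Wg chi) (mono1 u0) (fun _ => 0) x t e
                  ((norm3 x * chir (norm3 x) t - chi (norm3 x) t) / (norm3 x * norm3 x)) (dot e u0) Hz _ (mono1_deriv u0 x e))).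
    unfold DW. rewrite !rad_nz by auto. unfold Ag, Wg, mono2, mono1, mono0. field. lra.
    Unshelve.
    unfold Wg. auto_derive.
    - repeat split; try lra; try (eexists; apply Hd; lra).
    - rewrite (is_derive_unique _ _ _ (Hd _ _ Hp)). field. lra. }
  intros [x t]. destruct (Req_dec (norm3 x) 0) as [Hz|Hz].
  - apply deriv_at0; auto. apply norm3_zero; auto.
    + apply W_cont; auto.
    + apply DW_cont; auto.
  - apply Hnz; auto.
Qed.


Lemma lim0_id t : lim0 (fun u v => u) t 0.
Proof. intros eps. exists eps. intros u v Hu Hv. rewrite Rminus_0_r, Rabs_pos_eq; lra. Qed.

Section Psi.
Set Default Proof Using "All".
Variables psi Pr Pt Prr Prt Ptr Ptt : R -> R -> R.
Variables a b : R -> R.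
Hypothesis HdR : forall u t, 0 < u -> is_derive (fun y => psi y t) u (Pr u t).
Hypothesis HdT : forall u t, 0 < u -> is_derive (fun s => psi u s) t (Pt u t).
Hypothesis HdRR : forall u t, 0 < u -> is_derive (fun y => Pr y t) u (Prr u t).
Hypothesis HdRT : forall u t, 0 < u -> is_derive (fun s => Pr u s) t (Prt u t).
Hypothesis HdTR : forall u t, 0 < u -> is_derive (fun y => Pt y t) u (Ptr u t).
Hypothesis HdTT : forall u t, 0 < u -> is_derive (fun s => Pt u s) t (Ptt u t).
Hypothesis HcP : forall u t, 0 < u -> continuity_2d_pt psi u t.
Hypothesis HcR : forall u t, 0 < u -> continuity_2d_pt Pr u t.
Hypothesis HcT : forall u t, 0 < u -> continuity_2d_pt Pt u t.
Hypothesis HcRR : forall u t, 0 < u -> continuity_2d_pt Prr u t.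
Hypothesis HcRT : forall u t, 0 < u -> continuity_2d_pt Prt u t.
Hypothesis HcTR : forall u t, 0 < u -> continuity_2d_pt Ptr u t.
Hypothesis HcTT : forall u t, 0 < u -> continuity_2d_pt Ptt u t.
Hypothesis LP : forall t, lim0 psi t 0.
Hypothesis LT : forall t, lim0 Pt t 0.
Hypothesis LTT : forall t, lim0 Ptt t 0.
Hypothesis LR : forall t, lim0 Pr t (a t).
Hypothesis LTR : forall t, lim0 Ptr t (b t).
Hypothesis LRT : forall t, lim0 Prt t (b t).
Hypothesis LRR : forall t, lim0 Prr t 0.
Hypothesis Da : forall t, is_derive a t (b t).

Ltac exd := match goal with
 | |- ex_derive (fun x => psi x ?t) ?u => exists (Pr u t); apply HdR; lra
 | |- ex_derive (fun x => Pr x ?t) ?u => exists (Prr u t); apply HdRR; lra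
 | |- ex_derive (fun x => Pt x ?t) ?u => exists (Ptr u t); apply HdTR; lra
 | |- ex_derive (fun x => psi ?u x) ?t => exists (Pt u t); apply HdT; lra
 | |- ex_derive (fun x => Pr ?u x) ?t => exists (Prt u t); apply HdRT; lra
 | |- ex_derive (fun x => Pt ?u x) ?t => exists (Ptt u t); apply HdTT; lra
 end.
Ltac sidec := repeat match goal with |- _ /\ _ => split end; try exact I; try exd; try lra;
  try (repeat apply Rmult_integral_contrapositive_currified; lra).
Lemma Deq (f : R -> R) (x l : R) : is_derive f x l -> Derive f x = l.
Proof. apply is_derive_unique. Qed.
Ltac rwd := repeat match goal with
 | |- context [Derive (fun x => psi x ?t) ?u] => rewrite (Deq (fun x => psi x t) u (Pr u t)) by (apply HdR; lra)
 | |- context [Derive (fun x => Pr x ?t) ?u] => rewrite (Deq (fun x => Pr x t) u (Prr u t)) by (apply HdRR; lra)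
 | |- context [Derive (fun x => Pt x ?t) ?u] => rewrite (Deq (fun x => Pt x t) u (Ptr u t)) by (apply HdTR; lra)
 | |- context [Derive (fun x => psi ?u x) ?t] => rewrite (Deq (fun x => psi u x) t (Pt u t)) by (apply HdT; lra)
 | |- context [Derive (fun x => Pr ?u x) ?t] => rewrite (Deq (fun x => Pr u x) t (Prt u t)) by (apply HdRT; lra)
 | |- context [Derive (fun x => Pt ?u x) ?t] => rewrite (Deq (fun x => Pt u x) t (Ptt u t)) by (apply HdTT; lra)
 end.

Lemma lim_A t : lim0 (fun u v => (u * Pr u v - psi u v) / (u * u)) t 0.
Proof.
  apply lim_div_sq with (fun u v => u * Prr u v).
  - intros u s Hu. auto_derive; [sidec|]. rwd. ring.
  - intros s. replace 0 with (0 * a s - 0) by ring. apply lim0_minus; auto.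
    apply lim0_mult; auto. apply lim0_id.
  - apply lim0_ext with Prr; auto. intros u v Hu. field. lra.
Qed.

Definition A1 := Ag psi Pr.
Definition A1r (u t : R) : R := (u * u * Prr u t - 3 * (u * Pr u t - psi u t)) / (u * u * u * u).
Definition A1r' (u t : R) : R := (u * u * Prr u t - 3 * (u * Pr u t - psi u t)) / (u * u * u * u * u).

Lemma A1_cont1 (e : R3) : In e B3 -> forall z, continuous (rad A1 (mono1 e) (fun _ => 0)) z.
Proof.
  intros He. apply rad_cont_all with 1%nat.
  - intros; apply Ag_c2d; auto.
  - apply mono1_cont.
  - intros; apply mono1_bound; auto.
  - intros t. apply lim0_ext with (2 := lim_A t). intros u v Hu. unfold A1, Ag. field. lra.
Qed.

Lemma A1_cont2 (e u0 : R3) : In e B3 -> In u0 B3 -> forall z, continuous (rad A1 (mono2 e u0) (fun _ => 0)) z.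
Proof.
  intros He Hu0. apply rad_cont_all with 2%nat.
  - intros; apply Ag_c2d; auto.
  - apply mono2_cont.
  - intros; apply mono2_bound; auto.
  - intros t. replace 0 with (a t - a t) by ring.
    apply lim0_ext with (fun u v => Pr u v - psi u v / u).
    + intros u v Hu. unfold A1, Ag. simpl. field. lra.
    + apply lim0_minus; auto. apply lim_div with Pr; auto.
Qed.

Definition DA (e u0 e' : R3) (z : P4) : R :=
  rad A1r' (mono3 e' e u0) (fun _ => 0) z +
  (dot e' e * rad A1 (mono1 u0) (fun _ => 0) z + dot e' u0 * rad A1 (mono1 e) (fun _ => 0) z).

Lemma DA_cont e u0 e' : In e B3 -> In u0 B3 -> In e' B3 -> forall z, continuous (DA e u0 e') z.
Proof.
  intros He Hu0 He' z. unfold DA.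
  apply (cont_plus (fun z => rad A1r' (mono3 e' e u0) (fun _ => 0) z)
    (fun z => dot e' e * rad A1 (mono1 u0) (fun _ => 0) z + dot e' u0 * rad A1 (mono1 e) (fun _ => 0) z)).
  - apply rad_cont_all with 3%nat.
    + intros u t Hu. unfold A1r'. c2d; auto.
    + apply mono3_cont.
    + intros; apply mono3_bound; auto.
    + intros t. replace 0 with (0 - 3 * 0) by ring.
      apply lim0_ext with (fun u v => Prr u v - 3 * ((u * Pr u v - psi u v) / (u * u))).
      * intros u v Hu. unfold A1r'. simpl. field. lra.
      * apply lim0_minus; auto. apply lim0_scal. apply lim_A.
  - apply (cont_plus (fun z => dot e' e * rad A1 (mono1 u0) (fun _ => 0) z) (fun z => dot e' u0 * rad A1 (mono1 e) (fun _ => 0) z));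
    [apply (cont_mult (fun _ => dot e' e) (fun z => rad A1 (mono1 u0) (fun _ => 0) z))
    |apply (cont_mult (fun _ => dot e' u0) (fun z => rad A1 (mono1 e) (fun _ => 0) z))];
    try apply cont_const; apply A1_cont1; auto.
Qed.

Lemma A1_dx e u0 e' : In e B3 -> In u0 B3 -> In e' B3 ->
  forall z, isdx (rad A1 (mono2 e u0) (fun _ => 0)) e' z (DA e u0 e' z).
Proof.
  intros He Hu0 He'.
  assert (Hnz : forall z, norm3 (fst z) <> 0 -> isdx (rad A1 (mono2 e u0) (fun _ => 0)) e' z (DA e u0 e' z)).
  { intros [x t] Hz. simpl in Hz.
    assert (Hp : 0 < norm3 x) by (pose proof (norm3_pos x); lra).
    eapply (is_derive_eq _ _ _ _ (rad_dx A1 (mono2 e u0) (fun _ => 0) x t e'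
                  (A1r (norm3 x) t) _ Hz _ (mono2_deriv e u0 x e'))).
    unfold DA. rewrite !rad_nz by auto. unfold A1, Ag, A1r, A1r', mono3, mono2, mono1. field. lra.
    Unshelve.
    unfold A1, Ag, A1r. auto_derive; [sidec|]. rwd. field. lra. }
  intros [x t]. destruct (Req_dec (norm3 x) 0) as [Hz|Hz].
  - apply deriv_at0; auto. apply norm3_zero; auto.
    + apply A1_cont2; auto.
    + apply DA_cont; auto.
  - apply Hnz; auto.
Qed.

Lemma A1_dt e u0 : forall z, isdt (rad A1 (mono2 e u0) (fun _ => 0)) z (rad (Ag Pt Prt) (mono2 e u0) (fun _ => 0) z).
Proof.
  intros [x t]. destruct (Req_dec (norm3 x) 0) as [Hz|Hz].
  - rewrite rad_z by auto. apply rad_dt0; auto. apply (is_derive_const (K:=R_AbsRing) (V:=R_NormedModule)).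
  - rewrite rad_nz by auto. apply rad_dt; auto.
    assert (Hp : 0 < norm3 x) by (pose proof (norm3_pos x); lra).
    unfold A1, Ag. auto_derive; [sidec|]. rwd. field. lra.
Qed.

Lemma A1t_cont e u0 : In e B3 -> In u0 B3 -> forall z, continuous (rad (Ag Pt Prt) (mono2 e u0) (fun _ => 0)) z.
Proof.
  intros He Hu0. apply rad_cont_all with 2%nat.
  - intros; apply Ag_c2d; auto.
  - apply mono2_cont.
  - intros; apply mono2_bound; auto.
  - intros t. replace 0 with (b t - b t) by ring.
    apply lim0_ext with (fun u v => Prt u v - Pt u v / u).
    + intros u v Hu. unfold Ag. simpl. field. lra.
    + apply lim0_minus; auto. apply lim_div with Ptr; auto.
Qed.

Lemma C1f_A e u0 : In e B3 -> In u0 B3 -> C1f (rad A1 (mono2 e u0) (fun _ => 0)).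
Proof.
  intros He Hu0. apply C1f_intro.
  - apply A1_cont2; auto.
  - intros e' He'. exists (DA e u0 e'). split; [apply A1_dx; auto | apply DA_cont; auto].
  - exists (rad (Ag Pt Prt) (mono2 e u0) (fun _ => 0)). split; [apply A1_dt | apply A1t_cont; auto].
Qed.

Lemma E_cont : forall z, continuous (rad (Wg psi) mono0 a) z.
Proof.
  apply rad_cont_all1.
  - intros; apply Wg_c2d; auto.
  - intros t. apply lim_div with Pr; auto.
Qed.

Lemma E_dx e' : In e' B3 -> forall z, isdx (rad (Wg psi) mono0 a) e' z (rad A1 (mono1 e') (fun _ => 0) z).
Proof.
  intros He'.
  assert (Hnz : forall z, norm3 (fst z) <> 0 -> isdx (rad (Wg psi) mono0 a) e' z (rad A1 (mono1 e') (fun _ => 0) z)).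
  { intros [x t] Hz. simpl in Hz.
    assert (Hp : 0 < norm3 x) by (pose proof (norm3_pos x); lra).
    eapply (is_derive_eq _ _ _ _ (rad_dx (Wg psi) mono0 a x t e'
                  ((norm3 x * Pr (norm3 x) t - psi (norm3 x) t) / (norm3 x * norm3 x)) 0 Hz _ (mono0_deriv x e'))).
    rewrite !rad_nz by auto. unfold A1, Ag, Wg, mono0, mono1. field. lra.
    Unshelve.
    unfold Wg. auto_derive; [sidec|]. rwd. field. lra. }
  intros [x t]. destruct (Req_dec (norm3 x) 0) as [Hz|Hz].
  - apply deriv_at0; auto. apply norm3_zero; auto.
    + apply E_cont.
    + apply A1_cont1; auto.
  - apply Hnz; auto.
Qed.

Lemma E_dt : forall z, isdt (rad (Wg psi) mono0 a) z (rad (Wg Pt) mono0 b z).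
Proof.
  intros [x t]. destruct (Req_dec (norm3 x) 0) as [Hz|Hz].
  - rewrite rad_z by auto. apply rad_dt0; auto.
  - rewrite rad_nz by auto. apply rad_dt; auto.
    assert (Hp : 0 < norm3 x) by (pose proof (norm3_pos x); lra).
    unfold Wg. auto_derive; [sidec|]. rwd. field. lra.
Qed.

Lemma C1f_E : C1f (rad (Wg psi) mono0 a).
Proof.
  apply C1f_intro.
  - apply E_cont.
  - intros e' He'. exists (rad A1 (mono1 e') (fun _ => 0)). split; [apply E_dx; auto | apply A1_cont1; auto].
  - exists (rad (Wg Pt) mono0 b). split; [apply E_dt|].
    apply rad_cont_all1.
    + intros; apply Wg_c2d; auto.
    + intros t. apply lim_div with Ptr; auto.
Qed.

Lemma C1f_WT u0 : In u0 B3 -> C1f (rad (Wg Pt) (mono1 u0) (fun _ => 0)).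
Proof.
  intros Hu0. apply C1f_intro.
  - apply W_cont; auto.
  - intros e He. exists (DW Pt Ptr b e u0). split; [apply W_dx; auto | apply DW_cont; auto].
  - exists (rad (Wg Ptt) (mono1 u0) (fun _ => 0)). split; [apply W_dt; auto | apply W_cont; auto].
Qed.

Lemma C2_U u0 : In u0 B3 -> C2 B4 (rad (Wg psi) (mono1 u0) (fun _ => 0)).
Proof.
  intros Hu0. apply C2_intro.
  - apply W_cont; auto.
  - intros e He. exists (DW psi Pr a e u0). split; [apply W_dx; auto|].
    unfold DW. apply (C1f_plus (rad (Ag psi Pr) (mono2 e u0) (fun _ => 0)) (fun z => dot e u0 * rad (Wg psi) mono0 a z)).
    + apply C1f_A; auto.
    + apply C1f_scal. apply C1f_E.
  - exists (rad (Wg Pt) (mono1 u0) (fun _ => 0)). split; [apply W_dt; auto | apply C1f_WT; auto].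
Qed.

End Psi.


Definition e1 : R3 := (1,0,0).
Definition e2 : R3 := (0,1,0).
Definition e3 : R3 := (0,0,1).
Lemma e1B : In e1 B3. Proof. simpl; auto. Qed.
Lemma e2B : In e2 B3. Proof. simpl; auto. Qed.
Lemma e3B : In e3 B3. Proof. simpl; auto. Qed.

Definition RU (psi : R -> R -> R) (u : R3) : P4 -> R := rad (Wg psi) (mono1 u) (fun _ => 0).

Lemma U_comp psi x t : radial_field psi x t = (RU psi e1 (x,t), RU psi e2 (x,t), RU psi e3 (x,t)).
Proof.
  unfold radial_field, RU, rad, Wg, mono1, dot, e1, e2, e3. cbn [fst snd].
  destruct (Req_EM_T (norm3 x) 0); [reflexivity|].
  destruct x as [[x1 x2] x3]. unfold c1, c2, c3; cbn [fst snd]. f_equal; [f_equal|]; ring.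
Qed.

Lemma px1_isdx (G : P4 -> R) x t l : isdx G (1,0,0) (x,t) l -> px1 (fun x t => G (x,t)) x t = l.
Proof.
  unfold isdx, px1; simpl. intros H. apply is_derive_unique. apply (shift_d_inv (fun y => G (y, c2 x, c3 x, t))).
  eapply is_derive_ext; [|exact H]. intros h. simpl. f_equal. f_equal.
  destruct x as [[a b] c]; unfold addv, c1, c2, c3; simpl. f_equal; [f_equal|]; ring.
Qed.
Lemma px2_isdx (G : P4 -> R) x t l : isdx G (0,1,0) (x,t) l -> px2 (fun x t => G (x,t)) x t = l.
Proof.
  unfold isdx, px2; simpl. intros H. apply is_derive_unique. apply (shift_d_inv (fun y => G (c1 x, y, c3 x, t))).
  eapply is_derive_ext; [|exact H]. intros h. simpl. f_equal. f_equal.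
  destruct x as [[a b] c]; unfold addv, c1, c2, c3; simpl. f_equal; [f_equal|]; ring.
Qed.
Lemma px3_isdx (G : P4 -> R) x t l : isdx G (0,0,1) (x,t) l -> px3 (fun x t => G (x,t)) x t = l.
Proof.
  unfold isdx, px3; simpl. intros H. apply is_derive_unique. apply (shift_d_inv (fun y => G (c1 x, c2 x, y, t))).
  eapply is_derive_ext; [|exact H]. intros h. simpl. f_equal. f_equal.
  destruct x as [[a b] c]; unfold addv, c1, c2, c3; simpl. f_equal; [f_equal|]; ring.
Qed.
Lemma Dt_isdt (G : P4 -> R) x t l : isdt G (x,t) l -> Derive (fun u => G (x,u)) t = l.
Proof.
  unfold isdt; simpl. intros H. apply is_derive_unique. apply (shift_d_inv (fun u => G (x,u))). exact H.
Qed.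

Lemma choice_lim (g : R -> R -> R) : (forall t, exists l, lim0 g t l) -> exists L : R -> R, forall t, lim0 g t (L t).
Proof.
  intros H. exists (fun t => proj1_sig (constructive_indefinite_description _ (H t))).
  intros t. exact (proj2_sig (constructive_indefinite_description _ (H t))).
Qed.

Lemma norm3_scal k x : norm3 (k * c1 x, k * c2 x, k * c3 x) = Rabs k * norm3 x.
Proof.
  destruct x as [[a b] c]. unfold norm3, c1, c2, c3. cbn [fst snd].
  replace ((k * a) ^ 2 + (k * b) ^ 2 + (k * c) ^ 2) with (k ^ 2 * (a ^ 2 + b ^ 2 + c ^ 2)) by ring.
  rewrite sqrt_mult_alt by apply pow2_ge_0.
  rewrite <- (pow2_abs k), sqrt_pow2 by apply Rabs_pos. reflexivity.
Qed.

Lemma norm3_r00 r : 0 <= r -> norm3 (r,0,0) = r.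
Proof.
  intros Hr. unfold norm3, c1, c2, c3; cbn [fst snd].
  replace (r ^ 2 + 0 ^ 2 + 0 ^ 2) with (r ^ 2) by ring. apply sqrt_pow2; auto.
Qed.

Lemma triple_eq (a1 a2 a3 b1 b2 b3 : R) : a1 = b1 -> a2 = b2 -> a3 = b3 -> (a1, a2, a3) = (b1, b2, b3).
Proof. intros -> -> ->; reflexivity. Qed.

Lemma Derive_zero (f : R -> R) x : (forall y, f y = 0) -> Derive f x = 0.
Proof. intros H. rewrite (Derive_ext f (fun _ => 0)) by auto. apply Derive_const. Qed.

Theorem lemma2p2 (p : R) (s q V : R3 -> R) (st qt Vt : R -> R)
  (psi : R -> R -> R) (sigma : R) :
  1 < p ->
  (sigma = 1 \/ sigma = -1) ->
  (forall x, 0 < s x) -> (forall x, 0 < q x) -> (forall x, 0 < V x) ->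
  C2 B3 s -> C2 B3 q -> C2 B3 V ->
  (forall x, s x = st (norm3 x)) ->
  (forall x, q x = qt (norm3 x)) ->
  (forall x, V x = Vt (norm3 x)) ->
  C2_halfplane psi ->
  (forall t, psi 0 t = 0) ->
  (forall t, filterlim (uncurry (dr (dr psi)))
               (within (fun z : R * R => 0 < fst z) (locally (0, t))) (locally 0)) ->
  C2_VF (radial_field psi) /\
  (solves_pde s q V p sigma (radial_field psi) <-> solves_ode st qt Vt p sigma psi).
Proof.
  intros Hp Hsig Hs Hq HV Cs Cq CV Es Eq EV HC Hpsi0 Hrr.
  destruct HC as [Hex [Hcont [Hlim Hcl]]].
  assert (HdR : forall u t, 0 < u -> is_derive (fun y => psi y t) u (dr psi u t)).
  { intros u t Hu. apply Derive_correct. apply (Hex u t Hu). }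
  assert (HdT : forall u t, 0 < u -> is_derive (fun s => psi u s) t (dt psi u t)).
  { intros u t Hu. apply Derive_correct. apply (Hex u t Hu). }
  assert (HdRR : forall u t, 0 < u -> is_derive (fun y => dr psi y t) u (dr (dr psi) u t)).
  { intros u t Hu. apply Derive_correct. apply (Hex u t Hu). }
  assert (HdRT : forall u t, 0 < u -> is_derive (fun s => dr psi u s) t (dt (dr psi) u t)).
  { intros u t Hu. apply Derive_correct. apply (Hex u t Hu). }
  assert (HdTR : forall u t, 0 < u -> is_derive (fun y => dt psi y t) u (dr (dt psi) u t)).
  { intros u t Hu. apply Derive_correct. apply (Hex u t Hu). }
  assert (HdTT : forall u t, 0 < u -> is_derive (fun s => dt psi u s) t (dt (dt psi) u t)).
  { intros u t Hu. apply Derive_correct. apply (Hex u t Hu). }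
  assert (Hc2 : forall g, In g (derivs2 psi) -> forall u t, 0 < u -> continuity_2d_pt g u t).
  { intros g Hg u t Hu. apply continuity_2d_pt_filterlim. apply (Hcont g Hg u t Hu). }
  assert (HcP : forall u t, 0 < u -> continuity_2d_pt psi u t) by (apply Hc2; simpl; tauto).
  assert (HcR : forall u t, 0 < u -> continuity_2d_pt (dr psi) u t) by (apply Hc2; simpl; tauto).
  assert (HcT : forall u t, 0 < u -> continuity_2d_pt (dt psi) u t) by (apply Hc2; simpl; tauto).
  assert (HcRR : forall u t, 0 < u -> continuity_2d_pt (dr (dr psi)) u t) by (apply Hc2; simpl; tauto).
  assert (HcRT : forall u t, 0 < u -> continuity_2d_pt (dt (dr psi)) u t) by (apply Hc2; simpl; tauto).
  assert (HcTR : forall u t, 0 < u -> continuity_2d_pt (dr (dt psi)) u t) by (apply Hc2; simpl; tauto).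
  assert (HcTT : forall u t, 0 < u -> continuity_2d_pt (dt (dt psi)) u t) by (apply Hc2; simpl; tauto).
  assert (Hl : forall g, In g (derivs2 psi) -> forall t, exists l, lim0 g t l).
  { intros g Hg t. destruct (Hlim g Hg t) as [l Hl]. exists l. apply lim0_of_filterlim. exact Hl. }
  assert (LP : forall t, lim0 psi t 0).
  { intros t. pose proof (Hcl t) as H. rewrite Hpsi0 in H. apply lim0_of_filterlim_le. exact H. }
  destruct (choice_lim (dr psi)) as [a LR]. { apply Hl; simpl; tauto. }
  destruct (choice_lim (dr (dt psi))) as [b LTR]. { apply Hl; simpl; tauto. }
  assert (LT : forall t, lim0 (dt psi) t 0).
  { intros t. destruct (Hl (dt psi) ltac:(simpl; tauto) t) as [l Hlt].
    assert (Hd : is_derive (fun _ => 0) t l) by (apply (lim0_deriv psi (dt psi) (fun _ => 0)); auto).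
    apply is_derive_unique in Hd. rewrite Derive_const in Hd. rewrite Hd. exact Hlt. }
  assert (LTT : forall t, lim0 (dt (dt psi)) t 0).
  { intros t. destruct (Hl (dt (dt psi)) ltac:(simpl; tauto) t) as [l Hlt].
    assert (Hd : is_derive (fun _ => 0) t l) by (apply (lim0_deriv (dt psi) (dt (dt psi)) (fun _ => 0)); auto).
    apply is_derive_unique in Hd. rewrite Derive_const in Hd. rewrite Hd. exact Hlt. }
  assert (Sw : forall u t, 0 < u -> dr (dt psi) u t = dt (dr psi) u t).
  { intros u t Hu. apply Schwarz.
    - assert (Hu2 : 0 < u / 2) by lra. exists (mkposreal _ Hu2). intros u' v Hu' Hv. simpl in Hu'.
      assert (Hpos : 0 < u') by (pose proof (Rabs_def2 _ _ Hu'); lra).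
      destruct (Hex u' v Hpos) as (E1 & E2 & E3 & E4 & E5 & E6). repeat split; assumption.
    - apply HcTR; auto.
    - apply HcRT; auto. }
  assert (LRT : forall t, lim0 (dt (dr psi)) t (b t)).
  { intros t. apply lim0_ext with (dr (dt psi)); auto. }
  assert (LRR : forall t, lim0 (dr (dr psi)) t 0).
  { intros t. apply lim0_of_filterlim. apply Hrr. }
  assert (Da : forall t, is_derive a t (b t)).
  { intros t. apply (lim0_deriv (dr psi) (dt (dr psi)) a); auto. }
  assert (HU : forall u0, In u0 B3 -> C2 B4 (RU psi u0)).
  { intros u0 Hu0. apply (C2_U psi (dr psi) (dt psi) (dr (dr psi)) (dt (dr psi)) (dr (dt psi)) (dt (dt psi)) a b
      HdR HdT HdRR HdRT HdTR HdTT HcP HcR HcT HcRR HcRT HcTR HcTT LP LT LTT LR LTR LRT LRR Da u0 Hu0). }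
  split.
  { unfold C2_VF. split; [|split].
    - replace (fun z : P4 => c1 (radial_field psi (fst z) (snd z))) with (RU psi e1); [apply HU, e1B|].
      apply functional_extensionality. intros [x t]. rewrite U_comp. reflexivity.
    - replace (fun z : P4 => c2 (radial_field psi (fst z) (snd z))) with (RU psi e2); [apply HU, e2B|].
      apply functional_extensionality. intros [x t]. rewrite U_comp. reflexivity.
    - replace (fun z : P4 => c3 (radial_field psi (fst z) (snd z))) with (RU psi e3); [apply HU, e3B|].
      apply functional_extensionality. intros [x t]. rewrite U_comp. reflexivity. }
  assert (EF1 : F1 (radial_field psi) = fun x t => RU psi e1 (x,t)).
  { apply functional_extensionality; intros x; apply functional_extensionality; intros t.
    unfold F1. rewrite U_comp. reflexivity. }
  assert (EF2 : F2 (radial_field psi) = fun x t => RU psi e2 (x,t)).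
  { apply functional_extensionality; intros x; apply functional_extensionality; intros t.
    unfold F2. rewrite U_comp. reflexivity. }
  assert (EF3 : F3 (radial_field psi) = fun x t => RU psi e3 (x,t)).
  { apply functional_extensionality; intros x; apply functional_extensionality; intros t.
    unfold F3. rewrite U_comp. reflexivity. }
  assert (HDW : forall e u0, In e B3 -> In u0 B3 -> forall z,
             isdx (RU psi u0) e z (DW psi (dr psi) a e u0 z)).
  { intros e u0 He Hu0. apply W_dx; auto. }
  assert (Hcurl : curl (radial_field psi) = fun _ _ => (0,0,0)).
  { apply functional_extensionality; intros x; apply functional_extensionality; intros t.
    unfold curl. rewrite EF1, EF2, EF3.
    rewrite (px2_isdx _ x t _ (HDW e2 e3 e2B e3B (x,t))).
    rewrite (px3_isdx _ x t _ (HDW e3 e2 e3B e2B (x,t))).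
    rewrite (px3_isdx _ x t _ (HDW e3 e1 e3B e1B (x,t))).
    rewrite (px1_isdx _ x t _ (HDW e1 e3 e1B e3B (x,t))).
    rewrite (px1_isdx _ x t _ (HDW e1 e2 e1B e2B (x,t))).
    rewrite (px2_isdx _ x t _ (HDW e2 e1 e2B e1B (x,t))).
    unfold DW, rad, mono2, dot, e1, e2, e3. cbn [fst snd].
    destruct (Req_EM_T (norm3 x) 0); unfold c1, c2, c3; cbn [fst snd]. all: apply triple_eq; ring. }
  assert (Hcc : forall x t, curl (curl (radial_field psi)) x t = (0,0,0)).
  { intros x t. rewrite Hcurl. unfold curl, px1, px2, px3, F1, F2, F3. cbn [c1 c2 c3 fst snd].
    rewrite !Derive_const. apply triple_eq; ring. }
  assert (Hdtt : forall u0, In u0 B3 -> forall x t,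
            ptt (fun x t => RU psi u0 (x,t)) x t = rad (Wg (dt (dt psi))) (mono1 u0) (fun _ => 0) (x,t)).
  { intros u0 Hu0 x t. unfold ptt.
    rewrite (Derive_ext _ (fun s => rad (Wg (dt psi)) (mono1 u0) (fun _ => 0) (x,s))).
    - apply (Dt_isdt (rad (Wg (dt psi)) (mono1 u0) (fun _ => 0))). apply W_dt. auto.
    - intros s'. apply (Dt_isdt (RU psi u0)). apply W_dt. auto. }
  assert (HnU : forall x t, norm3 (radial_field psi x t) = Rabs (psi (norm3 x) t)).
  { intros x t. unfold radial_field. destruct (Req_EM_T (norm3 x) 0) as [Hz|Hz].
    - rewrite Hz, Hpsi0, Rabs_R0. apply norm3_0.
    - rewrite norm3_scal. unfold Rdiv. rewrite Rabs_mult, Rabs_inv, (Rabs_pos_eq (norm3 x)) by apply norm3_pos.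
      field. auto. }
  unfold solves_pde, solves_ode. split.
  - intros HP r t Hr. destruct (Req_dec r 0) as [->|Hr0].
    + rewrite Hpsi0.
      assert (E0 : dt (dt psi) 0 t = 0).
      { unfold dt. apply Derive_zero. intros y. apply Derive_zero. intros y'. apply Hpsi0. }
      rewrite E0. ring.
    + assert (Hrp : 0 < r) by lra.
      specialize (HP (r,0,0) t). cbv zeta in HP. destruct HP as [H1 _].
      rewrite HnU, Hcc, Es, Eq, EV in H1. unfold dtt in H1. cbn [c1 c2 c3 fst snd] in H1.
      rewrite EF1 in H1. rewrite (Hdtt e1 e1B) in H1. rewrite U_comp in H1. cbn [c1 fst snd] in H1.
      unfold RU in H1.
      rewrite !rad_nz in H1 by (rewrite norm3_r00; lra).
      rewrite norm3_r00 in H1 by lra.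
      unfold Wg, mono1, dot, e1, c1, c2, c3 in H1. cbn [fst snd] in H1.
      etransitivity; [|exact H1]. field. lra.
  - intros HO x t. cbv zeta. rewrite Hcc. unfold dtt. cbn [c1 c2 c3 fst snd].
    rewrite EF1, EF2, EF3, !(Hdtt _ e1B), !(Hdtt _ e2B), !(Hdtt _ e3B), Es, Eq, EV, HnU, U_comp.
    cbn [c1 c2 c3 fst snd]. unfold RU.
    destruct (Req_dec (norm3 x) 0) as [Hz|Hz].
    + rewrite !rad_z by auto. repeat split; ring.
    + rewrite !rad_nz by auto.
      assert (Hrp : 0 < norm3 x) by (pose proof (norm3_pos x); lra).
      specialize (HO (norm3 x) t ltac:(lra)).
      unfold Wg, mono1.
      repeat split.
      * transitivity (dot x e1 / norm3 x * (st (norm3 x) * dt (dt psi) (norm3 x) t + qt (norm3 x) * psi (norm3 x) t +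
          sigma * Vt (norm3 x) * (rpow (Rabs (psi (norm3 x) t)) (p - 1) * psi (norm3 x) t))); [field; lra|].
        rewrite HO. ring.
      * transitivity (dot x e2 / norm3 x * (st (norm3 x) * dt (dt psi) (norm3 x) t + qt (norm3 x) * psi (norm3 x) t +
          sigma * Vt (norm3 x) * (rpow (Rabs (psi (norm3 x) t)) (p - 1) * psi (norm3 x) t))); [field; lra|].
        rewrite HO. ring.
      * transitivity (dot x e3 / norm3 x * (st (norm3 x) * dt (dt psi) (norm3 x) t + qt (norm3 x) * psi (norm3 x) t +
          sigma * Vt (norm3 x) * (rpow (Rabs (psi (norm3 x) t)) (p - 1) * psi (norm3 x) t))); [field; lra|].
        rewrite HO. ring.
Qed.
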